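(* Let $\sigma_{01},\sigma_{12}>0$, $\sigma_{02}=\sigma_{01}+\sigma_{12}$, let $\Gamma_{11},\Gamma_{22}\ge0$ and $\Gamma_{12}=\Gamma_{21}=0$, and let $M=(M_1,M_2)$ with $M_1,M_2>0$. Then a minimizing configuration for $\overline{e_0}(M)$ cannot contain two different types of single bubbles, i.e. there are no indices $k,l$ with $m^k=(m_1^k,0)$, $m_1^k>0$, and $m^l=(0,m_2^l)$, $m_2^l>0$.
   Context: For $m=(m_1,m_2)$ with $m_1,m_2\ge0$ set $$e_0(m)=2\sigma_{01}\sqrt{\pi(m_1+m_2)}+2\sigma_{12}\sqrt{\pi m_2}+\sum_{i,j=1}^2\frac{\Gamma_{ij}m_im_j}{4\pi}.$$ $\overline{e_0}(M)=\inf\{\sum_{k\ge1}e_0(m^k): m^k=(m_1^k,m_2^k),\ m_i^k\ge0,\ \sum_k m_i^k=M_i,\ i=1,2\}$; a minimizing configuration is an admissible sequence $(m^k)$ attaining the infimum. *)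

(* Defs.v *)
From Stdlib Require Import Reals ClassicalEpsilon.
From Coquelicot Require Import Coquelicot.
Open Scope R_scope.

Definition e0 (s01 s12 G11 G12 G21 G22 : R) (m : R * R) : R :=
  let m1 := fst m in let m2 := snd m in
  2 * s01 * sqrt (PI * (m1 + m2)) + 2 * s12 * sqrt (PI * m2)
  + (G11 * m1 * m1 + G12 * m1 * m2 + G21 * m2 * m1 + G22 * m2 * m2) / (4 * PI).

(* Admissible sequence (m^k)_k (indexed by nat instead of k >= 1):
   m_i^k >= 0 and sum_k m_i^k = M_i. *)
Definition admissible (M1 M2 : R) (m : nat -> R * R) : Prop :=
  (forall k, 0 <= fst (m k) /\ 0 <= snd (m k)) /\
  is_series (fun k => fst (m k)) M1 /\ is_series (fun k => snd (m k)) M2.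

Definition total_energy (s01 s12 G11 G12 G21 G22 : R) (m : nat -> R * R) : Rbar :=
  match excluded_middle_informative
          (ex_series (fun k => e0 s01 s12 G11 G12 G21 G22 (m k))) with
  | left _ => Finite (Series (fun k => e0 s01 s12 G11 G12 G21 G22 (m k)))
  | right _ => p_infty
  end.

Definition e0bar (s01 s12 G11 G12 G21 G22 M1 M2 : R) : Rbar :=
  Glb_Rbar (fun E => exists m, admissible M1 M2 m /\
              total_energy s01 s12 G11 G12 G21 G22 m = Finite E).

Definition minimizing (s01 s12 G11 G12 G21 G22 M1 M2 : R) (m : nat -> R * R) : Prop :=
  admissible M1 M2 m /\
  total_energy s01 s12 G11 G12 G21 G22 m = e0bar s01 s12 G11 G12 G21 G22 M1 M2.

(* Main.v *)
Require Import Defs.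
From Stdlib Require Import Reals Lra Lia Psatz ClassicalEpsilon.
From Coquelicot Require Import Coquelicot.
Open Scope R_scope.

Lemma is_series_zero : is_series (fun _ : nat => 0) 0.
Proof.
  unfold is_series. apply filterlim_ext with (fun _ => 0).
  - intro n. induction n. + rewrite sum_O. reflexivity.
    + rewrite sum_Sn, <- IHn. unfold plus; simpl. lra.
  - apply filterlim_const.
Qed.

Lemma is_series_delta (k : nat) (c : R) :
  is_series (fun n => if Nat.eq_dec n k then c else 0) c.
Proof.
  apply is_series_decr_n with (n := S k); [lia|].
  simpl Init.Nat.pred.
  assert (H0 : forall j, (j < k)%nat -> sum_n (fun n => if Nat.eq_dec n k then c else 0) j = 0).
  { induction j; intro Hj.
    - rewrite sum_O. destruct (Nat.eq_dec 0 k); [lia|reflexivity].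
    - rewrite sum_Sn, IHj by lia. destruct (Nat.eq_dec (S j) k); [lia|]. unfold plus; simpl; lra. }
  assert (Hk : sum_n (fun n => if Nat.eq_dec n k then c else 0) k = c).
  { destruct k. - rewrite sum_O. destruct (Nat.eq_dec 0 0); [reflexivity|lia].
    - rewrite sum_Sn, H0 by lia. destruct (Nat.eq_dec (S k) (S k)); [|lia]. unfold plus; simpl; lra. }
  match goal with |- is_series _ (plus c (opp ?s)) => replace s with c by (symmetry; exact Hk) end.
  apply is_series_ext with (fun _ => 0).
  - intro n. destruct (Nat.eq_dec (S k + n) k); [lia|reflexivity].
  - match goal with |- is_series _ ?l => replace l with 0 by (unfold plus, opp; simpl; lra) end. apply is_series_zero.
Qed.

Lemma te_eq s01 s12 G11 G12 G21 G22 (m : nat -> R * R) s :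
  is_series (fun k => e0 s01 s12 G11 G12 G21 G22 (m k)) s ->
  total_energy s01 s12 G11 G12 G21 G22 m = Finite s.
Proof.
  intro H. unfold total_energy.
  destruct excluded_middle_informative as [e|n].
  - f_equal. apply is_series_unique. exact H.
  - exfalso. apply n. exists s. exact H.
Qed.

Lemma e0_00 s01 s12 G11 G12 G21 G22 : e0 s01 s12 G11 G12 G21 G22 (0,0) = 0.
Proof.
  unfold e0; simpl. replace (PI * (0 + 0)) with 0 by ring. replace (PI * 0) with 0 by ring.
  rewrite sqrt_0. assert (PI > 0) by apply PI_RGT_0. field. lra.
Qed.

Theorem lemma3p4 (s01 s12 s02 G11 G12 G21 G22 M1 M2 : R) (m : nat -> R * R) :
  0 < s01 -> 0 < s12 -> s02 = s01 + s12 ->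
  0 <= G11 -> 0 <= G22 -> G12 = 0 -> G21 = 0 ->
  0 < M1 -> 0 < M2 ->
  minimizing s01 s12 G11 G12 G21 G22 M1 M2 m ->
  ~ (exists k l : nat,
       snd (m k) = 0 /\ 0 < fst (m k) /\ fst (m l) = 0 /\ 0 < snd (m l)).
Proof.
  intros Hs01 Hs12 _ HG11 HG22 HG12 HG21 HM1 HM2 [[Hnn [H1 H2]] Hmin]
    [k [l [Hk2 [Hk1 [Hl1 Hl2]]]]].
  assert (Hkl : k <> l) by (intro; subst; lra).
  pose proof (proj1 (Glb_Rbar_correct (fun E => exists m, admissible M1 M2 m /\
              total_energy s01 s12 G11 G12 G21 G22 m = Finite E))) as Hlb.
  fold (e0bar s01 s12 G11 G12 G21 G22 M1 M2) in Hlb.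
  rewrite <- Hmin in Hlb.
  set (E := fun n => e0 s01 s12 G11 G12 G21 G22 (m n)).
  assert (Hex : ex_series E).
  { unfold total_energy in Hlb.
    destruct excluded_middle_informative as [ex|nex]; [exact ex|].
    exfalso.
    set (m0 := fun n : nat => if Nat.eq_dec n 0 then (M1, M2) else (0, 0)).
    assert (Hm0 : Rbar_le p_infty (Finite (e0 s01 s12 G11 G12 G21 G22 (M1, M2)))).
    { apply Hlb. exists m0. split.
      - split; [|split].
        + intro n. unfold m0. destruct (Nat.eq_dec n 0); simpl; lra.
        + eapply is_series_ext; [|apply (is_series_delta 0 M1)].
          intro n. unfold m0. destruct (Nat.eq_dec n 0); reflexivity.
        + eapply is_series_ext; [|apply (is_series_delta 0 M2)].
          intro n. unfold m0. destruct (Nat.eq_dec n 0); reflexivity.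
      - apply te_eq.
        eapply is_series_ext; [|apply (is_series_delta 0 (e0 s01 s12 G11 G12 G21 G22 (M1, M2)))].
        intro n. unfold m0. destruct (Nat.eq_dec n 0); [reflexivity|]. symmetry; apply e0_00. }
    exact Hm0. }
  destruct Hex as [S HS].
  rewrite (te_eq _ _ _ _ _ _ m S HS) in Hlb.
  set (a := fst (m k)). set (b := snd (m l)).
  assert (Emk : m k = (a, 0)) by (rewrite <- Hk2; apply surjective_pairing).
  assert (Eml : m l = (0, b)) by (rewrite <- Hl1; apply surjective_pairing).
  assert (Ha : 0 < a) by exact Hk1. assert (Hb : 0 < b) by exact Hl2.
  clearbody a b.
  set (m' := fun n => if Nat.eq_dec n k then (a, b) else if Nat.eq_dec n l then (0,0) else m n).
  set (d := e0 s01 s12 G11 G12 G21 G22 (a, b) - e0 s01 s12 G11 G12 G21 G22 (m k)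
            - e0 s01 s12 G11 G12 G21 G22 (m l)).
  assert (Hd : d < 0).
  { unfold d. rewrite Emk, Eml. subst G12 G21.
    assert (PI > 0) by apply PI_RGT_0.
    assert (X2 := sqrt_sqrt (PI * (a + b)) ltac:(nra)).
    assert (Y2 := sqrt_sqrt (PI * a) ltac:(nra)).
    assert (Z2 := sqrt_sqrt (PI * b) ltac:(nra)).
    assert (X0 := sqrt_pos (PI * (a + b))).
    assert (Y0 := sqrt_lt_R0 (PI * a) ltac:(nra)).
    assert (Z0 := sqrt_lt_R0 (PI * b) ltac:(nra)).
    assert (HX : sqrt (PI * (a + b)) < sqrt (PI * a) + sqrt (PI * b)) by nra.
    unfold e0; simpl.
    replace (PI * (a + 0)) with (PI * a) by ring.
    replace (PI * (0 + b)) with (PI * b) by ring.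
    replace (PI * 0) with 0 by ring. rewrite sqrt_0.
    match goal with |- ?L < 0 => replace L with
      (2 * s01 * (sqrt (PI * (a + b)) - sqrt (PI * a) - sqrt (PI * b))) by (field; lra) end.
    nra. }
  assert (Hm' : Rbar_le (Finite S) (Finite (S + d))).
  { apply Hlb. exists m'. split.
    - split; [|split].
      + intro n. unfold m'. destruct (Nat.eq_dec n k); [simpl; split; lra|].
        destruct (Nat.eq_dec n l); [simpl; split; lra|]. apply Hnn.
      + eapply is_series_ext; [|apply H1].
        intro n. unfold m'. destruct (Nat.eq_dec n k); [subst; rewrite Emk; reflexivity|].
        destruct (Nat.eq_dec n l); [subst; rewrite Eml; reflexivity|]. reflexivity.
      + assert (HH := is_series_plus _ _ _ _ (is_series_plus _ _ _ _ H2 (is_series_delta k b))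
                         (is_series_delta l (-b))).
        eapply is_series_ext; [|match type of HH with is_series ?f ?v =>
          replace v with M2 in HH by (unfold plus; simpl; lra) end; exact HH].
        intro n. unfold m', plus; simpl.
        destruct (Nat.eq_dec n k); [subst; destruct (Nat.eq_dec k l); [lia|]; rewrite Emk; simpl; lra|].
        destruct (Nat.eq_dec n l); [subst; rewrite Eml; simpl; lra|]. lra.
    - apply te_eq.
      assert (HH := is_series_plus _ _ _ _ (is_series_plus _ _ _ _ HS
              (is_series_delta k (e0 s01 s12 G11 G12 G21 G22 (a, b) - e0 s01 s12 G11 G12 G21 G22 (m k))))
                         (is_series_delta l (- e0 s01 s12 G11 G12 G21 G22 (m l)))).
      eapply is_series_ext; [|match type of HH with is_series ?f ?v =>
          replace v with (S + d) in HH by (unfold plus, d; simpl; lra) end; exact HH].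
      intro n. unfold m', E, plus; simpl.
      destruct (Nat.eq_dec n k); [subst; destruct (Nat.eq_dec k l); [lia|]; lra|].
      destruct (Nat.eq_dec n l); [subst; rewrite e0_00; lra|]. lra. }
  simpl in Hm'. lra.
Qed.
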